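(* There is an absolute constant $c>0$ such that the following holds. Let $n\ge 1$, $d\ge 1$, $t\ge 0$, and let $Q$ be any quantum circuit on $n$ qubits of depth $d$ whose gates are Clifford gates (from $\{H, S, \mathrm{CNOT}\}$) together with exactly $t$ gates $T=\mathrm{diag}(1,e^{i\pi/4})$. Then there exists a classical circuit $C:\{0,1\}^n\to\{0,1\}^n$, built from $\mathrm{NOT}$, $\mathrm{AND}$, $\mathrm{OR}$ gates of fan-in at most $2$ (arbitrary fan-out), of depth at most $c\,(d+t)$, that p-simulates $Q$; that is, for every $x\in\{0,1\}^n$, $\langle C(x)|\,Q\,|x\rangle\neq 0$.
   Context: The quantum circuit $Q$ takes as input a computational basis state $|x\rangle$, $x\in\{0,1\}^n$, on its $n$ qubit lines and all $n$ qubits are measured in the computational basis at the end; the unitary implemented by the circuit is also denoted $Q$. The depth of a quantum circuit is its number of layers of gates acting on disjoint qubits. $H$ is the Hadamard gate, $S=\mathrm{diag}(1,i)$, and $\mathrm{CNOT}$ is the controlled-NOT gate. The circuit $Q$ defines the relation $\mathcal{R}(Q)=\{(x,y)\in\{0,1\}^n\times\{0,1\}^n : \langle y|Q|x\rangle\neq 0\}$, and a classical circuit $C:\{0,1\}^n\to\{0,1\}^n$ is said to p-simulate $Q$ if $(x,C(x))\in\mathcal{R}(Q)$ for all $x\in\{0,1\}^n$. The depth of a classical circuit is the length of its longest input-to-output path of gates. *)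

(* Defs.v *)
(* Amplitudes live in algC (algebraic complex numbers),
   which contains 1/sqrt 2, i and e^{i pi/4} = (1+i)/sqrt 2. *)
From mathcomp Require Import all_boot all_order all_algebra.
From mathcomp Require Import algC.
Set Implicit Arguments. Unset Strict Implicit. Unset Printing Implicit Defensive.
Import Order.TTheory GRing.Theory Num.Theory.
Local Open Scope ring_scope.

Definition bits (n : nat) := {ffun 'I_n -> bool}.

Definition flip n (x : bits n) (i : 'I_n) : bits n :=
  [ffun j => if j == i then ~~ x i else x j].

Inductive gate (n : nat) : Type :=
| GH of 'I_n
| GS of 'I_n
| GT of 'I_n
| GCNOT of 'I_n & 'I_n.  (* control, target *)

Definition gate_support n (g : gate n) : seq 'I_n :=
  match g with
  | GH i | GS i | GT i => [:: i]
  | GCNOT c t => [:: c; t]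
  end.

Definition is_T n (g : gate n) : bool := if g is GT _ then true else false.

(* operators on n qubits, given by their matrix entries <y|A|x> *)
Definition op n := bits n -> bits n -> algC.

Definition op_id n : op n := fun y x => (y == x)%:R.
Definition op_mul n (A B : op n) : op n := fun y x => \sum_(z : bits n) A y z * B z x.

Definition same_off n (i : 'I_n) (y x : bits n) : bool :=
  [forall j, (j != i) ==> (y j == x j)].

Definition omega8 : algC := (1 + 'i) / sqrtC 2.

Definition gate_amp n (g : gate n) : op n := fun y x =>
  match g with
  | GH i => if same_off i y x then (if x i && y i then -1 else 1) / sqrtC 2 else 0
  | GS i => (y == x)%:R * (if x i then 'i else 1)
  | GT i => (y == x)%:R * (if x i then omega8 else 1)
  | GCNOT c t => (y == (if x c then flip x t else x))%:R
  end.

Definition layer n := seq (gate n).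

Definition layer_ok n (L : layer n) : bool :=
  (0 < size L)%N && uniq (flatten (map (@gate_support n) L)).

Definition layer_amp n (L : layer n) : op n :=
  foldr (fun g A => op_mul (gate_amp g) A) (@op_id n) L.

(* a circuit: list of layers, the head layer is applied first *)
Definition qcircuit n := seq (layer n).

Definition qcircuit_ok n (Q : qcircuit n) : bool := all (@layer_ok n) Q.

Definition qdepth n (Q : qcircuit n) : nat := size Q.

Definition T_count n (Q : qcircuit n) : nat :=
  sumn (map (fun L => count (@is_T n) L) Q).

Fixpoint qc_amp n (Q : qcircuit n) : op n :=
  match Q with
  | [::] => @op_id n
  | L :: Q' => op_mul (qc_amp Q') (layer_amp L)
  end.

(* Classical circuits over {NOT, AND, OR}, fan-in <= 2, arbitrary fan-out.
   A circuit with outputs y_1..y_n is represented by the unfolding of each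
   output into a formula; unfolding a DAG preserves the lengths of all
   input-to-output paths, so the circuit depth is the maximum formula depth. *)
Inductive bform (n : nat) : Type :=
| BVar of 'I_n
| BNot of bform n
| BAnd of bform n & bform n
| BOr of bform n & bform n.

Fixpoint beval n (f : bform n) (x : bits n) : bool :=
  match f with
  | BVar i => x i
  | BNot f => ~~ beval f x
  | BAnd f g => beval f x && beval g x
  | BOr f g => beval f x || beval g x
  end.

Fixpoint bdepth n (f : bform n) : nat :=
  match f with
  | BVar _ => 0
  | BNot f => (bdepth f).+1
  | BAnd f g | BOr f g => (maxn (bdepth f) (bdepth g)).+1
  end.

Definition ccircuit n := 'I_n -> bform n.

Definition ceval n (C : ccircuit n) (x : bits n) : bits n :=
  [ffun i => beval (C i) x].

Definition cdepth n (C : ccircuit n) : nat := \max_(i < n) bdepth (C i).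

Definition p_simulates n (C : ccircuit n) (Q : qcircuit n) : Prop :=
  forall x : bits n, qc_amp Q (ceval C x) x != 0.

(* Main.v *)
Require Import Defs.
From mathcomp Require Import all_boot all_order all_algebra algC.
From mathcomp Require Import zify ring.
From Stdlib Require Import FunctionalExtensionality.
Set Implicit Arguments. Unset Strict Implicit. Unset Printing Implicit Defensive.
Import Order.TTheory GRing.Theory Num.Theory.
Local Open Scope ring_scope.

Section Q.
Variable n : nat.

Definition vec := bits n -> algC.
Definition applyOp (A : op n) (v : vec) : vec := fun y => \sum_z A y z * v z.

Definition tph (c e : bool) : algC := if e then (if c then omega8^-1 else omega8) else 1.

Definition xamp (g : gate n) (c : bool) : op n :=
  match g with
  | GT i => fun y x => (y == x)%:R * tph c (x i)
  | _ => gate_amp g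
  end.

Lemma xamp0 g : xamp g false = gate_amp g.
Proof. by case: g. Qed.

Fixpoint chain (G : seq (gate n * bool)) (v : vec) : vec :=
  match G with [::] => v | (g, c) :: G' => applyOp (xamp g c) (chain G' v) end.

Definition bx (y : bits n) (a : 'I_n -> bool) : bits n := [ffun j => y j (+) a j].
Definition setb (y : bits n) (q : 'I_n) (e : bool) : bits n :=
  [ffun j => if j == q then e else y j].
Definition cnf (c t : 'I_n) (y : bits n) : bits n :=
  [ffun j => if j == t then y t (+) y c else y j].

Lemma sum_delta (y : bits n) (F : bits n -> algC) :
  \sum_z (y == z)%:R * F z = F y.
Proof.
rewrite (bigD1 y) //= eqxx mul1r big1 ?addr0 // => z /negbTE.
by rewrite eq_sym => ->; rewrite mul0r.
Qed.

Lemma cnfK c t : c != t -> involutive (cnf c t).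
Proof.
move=> ct y; apply/ffunP => j; rewrite !ffunE.
case jt: (j == t); last by [].
move/eqP: jt => jt; subst j.
by rewrite eqxx (negbTE ct) addbK.
Qed.

Lemma cnf_flip c t (x : bits n) : c != t ->
  (if x c then flip x t else x) = cnf c t x.
Proof.
move=> ct; apply/ffunP => j; rewrite [RHS]ffunE.
case xc: (x c); rewrite ?ffunE; case jt: (j == t); try (move/eqP: jt => jt; subst j); by rewrite ?xc ?addbT ?addbF.
Qed.

Lemma apply_S q c v y : applyOp (xamp (GS q) c) v y = (if y q then 'i else 1) * v y.
Proof.
rewrite /applyOp /= -(sum_delta y (fun z => (if z q then 'i else 1) * v z)).
by apply: eq_bigr => z _; rewrite mulrA.
Qed.

Lemma apply_T q c v y : applyOp (xamp (GT q) c) v y = tph c (y q) * v y.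
Proof.
rewrite /applyOp /= -(sum_delta y (fun z => tph c (z q) * v z)).
by apply: eq_bigr => z _; rewrite mulrA.
Qed.

Lemma apply_C c t d v y : c != t -> applyOp (xamp (GCNOT c t) d) v y = v (cnf c t y).
Proof.
move=> ct; rewrite /applyOp /= -(sum_delta (cnf c t y) v).
apply: eq_bigr => z _; rewrite cnf_flip //; congr (_ * _); congr (_%:R).
case: (eqVneq y (cnf c t z)) => [->|H]; first by rewrite (cnfK ct) eqxx. case: eqP => // E; by rewrite -E (cnfK ct) eqxx in H.
Qed.

Lemma setbK (y : bits n) q : setb y q (y q) = y.
Proof. by apply/ffunP => j; rewrite ffunE; case jq: (j == q) => //; move/eqP: jq => jq; subst j. Qed.

Lemma apply_H q c v y : applyOp (xamp (GH q) c) v y =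
  (v (setb y q false) + (if y q then -1 else 1) * v (setb y q true)) / sqrtC 2.
Proof.
rewrite /applyOp /=.
have ne : setb y q true != setb y q false.
  by apply/eqP => /ffunP /(_ q); rewrite !ffunE eqxx.
rewrite (bigD1 (setb y q false)) //= (bigD1 (setb y q true)) //= big1; last first.
  move=> z /andP [z0 z1].
  case so: (same_off q y z); last by rewrite mul0r.
  suff : z = setb y q (z q) by case: (z q) => e; rewrite -e eqxx in z0 z1.
  apply/ffunP => j; rewrite ffunE; case jq: (j == q); first by move/eqP: jq => jq; subst j.
  by move/forallP: so => /(_ j); rewrite jq /= => /eqP.
have so e : same_off q y (setb y q e).
  by apply/forallP => j; apply/implyP => jq; rewrite ffunE (negbTE jq).
rewrite !so !ffunE eqxx /= addr0.
by case: (y q); ring.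
Qed.


Definition dot (b u : 'I_n -> bool) : bool := \big[addb/false]_(j < n) (b j && u j).
Definition dot_off (q : 'I_n) (b u : 'I_n -> bool) : bool :=
  \big[addb/false]_(j < n | j != q) (b j && u j).
Definition sg (e : bool) : algC := if e then -1 else 1.
Definition Pv (a b : 'I_n -> bool) (w : vec) : vec :=
  fun y => sg (dot b (bx y a)) * w (bx y a).

Lemma sgD x y : sg (x (+) y) = sg x * sg y.
Proof. by case: x; case: y; rewrite /sg /= ?mulr1 ?mul1r ?mulN1r ?opprK. Qed.

Lemma sg_neq0 e : sg e != 0.
Proof. by case: e; rewrite /sg ?oppr_eq0 oner_eq0. Qed.

Lemma dot_split q b u : dot b u = dot_off q b u (+) (b q && u q).
Proof. by rewrite /dot (bigD1 q) //= addbC. Qed.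

Lemma dot_off_eq q b u b' u' : (forall j, j != q -> (b j && u j) = (b' j && u' j)) ->
  dot_off q b u = dot_off q b' u'.
Proof. by move=> H; apply: eq_bigr. Qed.

Lemma dot2 c t b u : c != t -> dot b u = (b c && u c) (+) (b t && u t) (+)
  \big[addb/false]_(j < n | (j != c) && (j != t)) (b j && u j).
Proof. by move=> ct; rewrite /dot (bigD1 c) // (bigD1 t) 1?eq_sym //= addbA. Qed.

Definition xok (g : gate n) := if g is GCNOT c t then c != t else true.
Definition sflip (g : gate n) (c : bool) (a : 'I_n -> bool) :=
  if g is GT q then c (+) a q else c.

Section Proc.
Variable T : Type.
Variable xr : T -> T -> T.
Definition st := (('I_n -> T) * ('I_n -> T))%type.
Definition upd (g : gate n) (s : st) : st :=
  match g with
  | GH q => (fun j => if j == q then s.2 q else s.1 j, fun j => if j == q then s.1 q else s.2 j)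
  | GS q => (s.1, fun j => if j == q then xr (s.2 q) (s.1 q) else s.2 j)
  | GT q => s
  | GCNOT c t => (fun j => if j == t then xr (s.1 t) (s.1 c) else s.1 j,
                  fun j => if j == c then xr (s.2 c) (s.2 t) else s.2 j)
  end.
Fixpoint proc (G : seq (gate n * bool)) (s : st) : st * seq T :=
  match G with
  | [::] => (s, [::])
  | (g, _) :: G' => let r := proc G' s in
      (upd g r.1, if g is GT q then r.1.1 q :: r.2 else r.2)
  end.
End Proc.

Definition om0 : omega8 != 0.
Proof.
rewrite /omega8 mulf_neq0 // ?invr_eq0 ?sqrtC_eq0 ?pnatr_eq0 //.
apply/eqP => H.
have : ('i : algC) = -1 by apply/eqP; rewrite -subr_eq0 opprK addrC H.
move=> Hi; have := sqrCi algC; rewrite Hi expr2 mulN1r opprK => /eqP.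
rewrite -subr_eq0 opprK (_ : 1 + 1 = 2%:R) // pnatr_eq0 //.
Qed.

Definition lamT (aq c : bool) : algC := if aq then tph c true else 1.
Lemma keyT c aq yq : tph c yq = lamT aq c * tph (c (+) aq) (yq (+) aq).
Proof.
have h := om0.
case: aq; case: yq; case: c; rewrite /lamT /tph /= ?mulr1 ?mul1r // ?mulfV ?mulVf ?invr_eq0 //.
Qed.

Definition psi (e : bool) : algC := if e then 'i else 1.
Lemma keyS aq bq yq : psi yq * sg (bq && (yq (+) aq)) =
  psi aq * (sg ((bq (+) aq) && (yq (+) aq)) * psi (yq (+) aq)).
Proof.
case: aq; case: bq; case: yq; rewrite /sg /psi /= ?mulr1 ?mul1r ?mulN1r ?mulrN1 ?mulrN ?mulNr // ;
  by rewrite -?expr2 ?sqrCi ?opprK.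
Qed.

Lemma keyH aq bq yq (W : bool -> algC) :
  sg (bq && aq) * W aq + sg yq * (sg (bq && ~~ aq) * W (~~ aq)) =
  sg (aq && bq) * (sg (aq && (yq (+) bq)) * (W false + sg (yq (+) bq) * W true)).
Proof. by case: aq; case: bq; case: yq; rewrite /sg /=; ring. Qed.

Lemma bx_setb y q e a a2 : (forall j, j != q -> a2 j = a j) ->
  bx (setb y q e) a = setb (bx y a2) q (e (+) a q).
Proof.
move=> H; apply/ffunP => j; rewrite !ffunE.
case jq: (j == q); first by move/eqP: jq => ->.
by rewrite H ?jq.
Qed.

Lemma dot_setb b u q e : dot b (setb u q e) = dot_off q b u (+) (b q && e).
Proof.
rewrite (dot_split q) ffunE eqxx; congr (_ (+) _).
by apply: dot_off_eq => j jq; rewrite ffunE (negbTE jq).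
Qed.

Lemma cnf_bx c t y a : c != t ->
  cnf c t (bx y (fun j => if j == t then a t (+) a c else a j)) = bx (cnf c t y) a.
Proof.
move=> ct; apply/ffunP => j; rewrite !ffunE /=.
case jt: (j == t).
  move/eqP: jt => jt; subst j; rewrite eqxx (negbTE ct).
  by case: (y t); case: (y c); case: (a t); case: (a c).
by [].
Qed.

Lemma dot_cnf c t b (u : bits n) : c != t ->
  dot (fun j => if j == c then b c (+) b t else b j) u = dot b (cnf c t u).
Proof.
move=> ct; rewrite !(dot2 _ _ ct).
have -> : \big[addb/false]_(j < n | (j != c) && (j != t))
      ((if j == c then b c (+) b t else b j) && u j) =
    \big[addb/false]_(j < n | (j != c) && (j != t)) (b j && cnf c t u j).
  by apply: eq_bigr => j /andP [jc jt]; rewrite ffunE (negbTE jc) (negbTE jt).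
rewrite eqxx [t == c]eq_sym (negbTE ct) !ffunE eqxx (negbTE ct).
by case: (b c); case: (b t); case: (u c); case: (u t); case: (\big[addb/false]_(j < n | (j != c) && (j != t)) (b j && cnf c t u j)).
Qed.

Lemma push_gate g c a b w : xok g -> exists2 l : algC, l != 0 & forall y,
  applyOp (xamp g c) (Pv a b w) y =
  l * Pv (upd addb g (a, b)).1 (upd addb g (a, b)).2 (applyOp (xamp g (sflip g c a)) w) y.
Proof.
case: g => [q|q|q|c' t] ok.
- exists (sg (a q && b q)); first exact: sg_neq0.
  move=> y; rewrite /Pv !apply_H /upd /=.
  set a2 := (fun j => if j == q then b q else a j).
  set b2 := (fun j => if j == q then a q else b j).
  have ha : forall j, j != q -> a2 j = a j by move=> j jq; rewrite /a2 (negbTE jq).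
  rewrite (@bx_setb y q false a a2 ha) (@bx_setb y q true a a2 ha) !dot_setb.
  set u := bx y a2.
  have uq : u q = y q (+) b q by rewrite /u ffunE /a2 eqxx.
  have e2 : dot_off q b2 u = dot_off q b u.
    by apply: dot_off_eq => j jq; rewrite /b2 (negbTE jq).
  rewrite (dot_split q b2 u) e2 /b2 eqxx uq !sgD addFb addTb.
  rewrite -[if y q then -1 else 1]/(sg (y q)) -[if y q (+) b q then -1 else 1]/(sg (y q (+) b q)).
  have K := keyH (a q) (b q) (y q) (fun e => w (setb u q e)); simpl in K.
  transitivity (sg (dot_off q b u) * (sg (b q && a q) * w (setb u q (a q)) +
     sg (y q) * (sg (b q && ~~ a q) * w (setb u q (~~ a q)))) / sqrtC 2); first ring.
  rewrite K; ring.
- exists (if a q then 'i else 1); first by case: (a q); rewrite ?neq0Ci ?oner_neq0.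
  move=> y; rewrite /Pv !apply_S /upd /=.
  set u := bx y a.
  have uq : u q = y q (+) a q by rewrite /u ffunE.
  set b2 := (fun j => if j == q then b q (+) a q else b j).
  have e2 : dot_off q b2 u = dot_off q b u.
    by apply: dot_off_eq => j jq; rewrite /b2 (negbTE jq).
  rewrite (dot_split q b2 u) (dot_split q b u) e2 /b2 eqxx uq !sgD.
  rewrite -[if y q then 'i else 1]/(psi (y q)) -[if y q (+) a q then 'i else 1]/(psi (y q (+) a q)).
  rewrite -[if a q then 'i else 1]/(psi (a q)).
  transitivity (sg (dot_off q b u) * w u * (psi (y q) * sg (b q && (y q (+) a q)))); first ring.
  rewrite keyS; ring.
- exists (lamT (a q) c).
    by rewrite /lamT; case: (a q); rewrite ?oner_neq0 // /tph; case: c; rewrite ?invr_eq0 om0.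
  move=> y; rewrite /Pv !apply_T /upd /sflip /=.
  set u := bx y a.
  have uq : u q = y q (+) a q by rewrite /u ffunE.
  rewrite uq.
  transitivity (sg (dot b u) * w u * tph c (y q)); first ring.
  rewrite (keyT c (a q)); ring.
- exists 1; first exact: oner_neq0.
  move=> y; rewrite /Pv !(apply_C _ _ _ ok) /upd /=.
  by rewrite (dot_cnf _ _ ok) (cnf_bx _ _ ok) mul1r.
Qed.

Definition allok (G : seq (gate n * bool)) := all (fun p => xok p.1) G.

Fixpoint flipG (G : seq (gate n * bool)) (sig : seq bool) : seq (gate n * bool) :=
  match G with
  | [::] => [::]
  | (g, c) :: G' => if g is GT q then (g, c (+) head false sig) :: flipG G' (behead sig)
                    else (g, c) :: flipG G' sig
  end.

Lemma allok_flip G sig : allok G -> allok (flipG G sig).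
Proof.
elim: G sig => [|[g c] G IH] sig //= /andP [h1 h2].
by case: g h1 => [q|q|q|c' t] h1; apply/andP; split => //; exact: IH.
Qed.

Lemma applyOpZ A l v : applyOp A (fun y => l * v y) = fun y => l * applyOp A v y.
Proof.
apply: functional_extensionality => y; rewrite /applyOp mulr_sumr.
by apply: eq_bigr => z _; rewrite mulrCA.
Qed.

Lemma chain_flip g c G a1 s w :
  chain (flipG ((g, c) :: G) (if g is GT q then a1 q :: s else s)) w =
  applyOp (xamp g (sflip g c a1)) (chain (flipG G s) w).
Proof. by case: g. Qed.

Lemma push G a b w : allok G -> exists2 l : algC, l != 0 & forall y,
  chain G (Pv a b w) y = l * Pv (proc addb G (a, b)).1.1 (proc addb G (a, b)).1.2
                               (chain (flipG G (proc addb G (a, b)).2) w) y.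
Proof.
elim: G => [|[g c] G IH] /=.
  by move=> _; exists 1; rewrite ?oner_neq0 // => y; rewrite mul1r.
move/andP => [okg okG]; have [l1 nz1 E1] := IH okG.
move: E1; case: (proc addb G (a, b)) => [[a1 b1] s1] /= E1.
have -> : chain G (Pv a b w) = fun y => l1 * Pv a1 b1 (chain (flipG G s1) w) y.
  exact: functional_extensionality.
rewrite applyOpZ.
have [l2 nz2 E2] := push_gate c a1 b1 (chain (flipG G s1) w) okg.
exists (l1 * l2); first by rewrite mulf_neq0.
move=> y; rewrite E2 chain_flip -mulrA; congr (_ * (_ * _)).
Qed.

Lemma setb2 (z : bits n) q e e' : setb (setb z q e) q e' = setb z q e'.
Proof. by apply/ffunP => j; rewrite !ffunE; case: (j == q). Qed.

Lemma inj_gate g c v : xok g -> (exists z, v z != 0) -> exists y, applyOp (xamp g c) v y != 0.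
Proof.
case: g => [q|q|q|c' t] ok [z nz].
- set u0 := v (setb z q false); set u1 := v (setb z q true).
  have s2 : sqrtC 2 != 0 :> algC by rewrite sqrtC_eq0 pnatr_eq0.
  case: (eqVneq (applyOp (xamp (GH q) c) v (setb z q false)) 0) => [h0|]; last by eauto.
  case: (eqVneq (applyOp (xamp (GH q) c) v (setb z q true)) 0) => [h1|]; last by eauto.
  move: h0 h1; rewrite !apply_H !setb2 !ffunE eqxx -/u0 -/u1 => /eqP h0 /eqP h1.
  move: h0 h1; rewrite !mulf_eq0 !invr_eq0 (negbTE s2) !orbF mul1r mulN1r.
  move=> /eqP h0 /eqP h1.
  have e0 : u0 = 0.
    have E : u0 *+ 2 = (u0 + u1) + (u0 - u1) by rewrite mulr2n; ring.
    have : u0 *+ 2 == 0 by rewrite E h0 h1 addr0.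
    by rewrite mulrn_eq0 => /eqP.
  have e1 : u1 = 0 by move: h0; rewrite e0 add0r.
  move: nz; rewrite -(setbK z q); case: (z q); rewrite -/u0 -/u1 ?e0 ?e1 eqxx //.
- by exists z; rewrite apply_S mulf_neq0 //; case: (z q); rewrite ?neq0Ci ?oner_neq0.
- exists z; rewrite apply_T mulf_neq0 // /tph.
  by case: (z q); rewrite ?oner_neq0 //; case: c; rewrite ?invr_eq0 om0.
- by exists (cnf c' t z); rewrite (apply_C _ _ _ ok) (cnfK ok).
Qed.

Lemma inj_chain G v : allok G -> (exists z, v z != 0) -> exists y, chain G v y != 0.
Proof.
elim: G => [|[g c] G IH] //= /andP [okg okG] h.
exact: inj_gate okg (IH okG h).
Qed.

Lemma applyOp_mul A B v : applyOp (op_mul A B) v = applyOp A (applyOp B v).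
Proof.
apply: functional_extensionality => y; rewrite /applyOp /op_mul.
under eq_bigr do rewrite mulr_suml.
rewrite exchange_big; apply: eq_bigr => w _; rewrite mulr_sumr.
by apply: eq_bigr => z _; rewrite mulrA.
Qed.

Lemma applyOp_id v : applyOp (@op_id n) v = v.
Proof. by apply: functional_extensionality => y; rewrite /applyOp /op_id sum_delta. Qed.

Definition embed (L : seq (gate n)) := map (fun g => (g, false)) L.

Lemma chain_cat G1 G2 v : chain (G1 ++ G2) v = chain G1 (chain G2 v).
Proof. by elim: G1 => [|[g c] G IH] //=; rewrite IH. Qed.

Lemma layer_chain L v : applyOp (layer_amp L) v = chain (embed L) v.
Proof.
elim: L => [|g L IH] /=; first exact: applyOp_id.
by rewrite applyOp_mul IH xamp0.
Qed.

Lemma qc_chain Q v : applyOp (qc_amp Q) v = chain (embed (flatten (rev Q))) v.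
Proof.
elim: Q v => [|L Q IH] v /=; first exact: applyOp_id.
by rewrite applyOp_mul IH layer_chain rev_cons flatten_rcons /embed map_cat chain_cat.
Qed.

Lemma qc_col Q y x : qc_amp Q y x = applyOp (qc_amp Q) (fun z => (z == x)%:R) y.
Proof.
rewrite /applyOp -(sum_delta x (fun z => qc_amp Q y z)).
by apply: eq_bigr => z _; rewrite mulrC eq_sym.
Qed.

Section ProcT.
Variables (T : Type) (xr : T -> T -> T).

Lemma proc_cat G1 G2 s : proc xr (G1 ++ G2) s =
  ((proc xr G1 (proc xr G2 s).1).1, (proc xr G1 (proc xr G2 s).1).2 ++ (proc xr G2 s).2).
Proof.
elim: G1 => [|[g c] G IH]; first by case: (proc xr G2 s).
by rewrite /= IH /=; case: g.
Qed.

Lemma proc_size G s : size (proc xr G s).2 = count (fun p => is_T p.1) G.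
Proof. by elim: G => [|[g c] G IH] //=; case: g => * /=; rewrite IH. Qed.

Lemma upd_off g s j : j \notin gate_support g ->
  (upd xr g s).1 j = s.1 j /\ (upd xr g s).2 j = s.2 j.
Proof.
case: g => [q|q|q|c t] /=; rewrite ?inE ?negb_or.
- by move/negbTE => ->.
- by move/negbTE => ->.
- by [].
- by case/andP => /negbTE -> /negbTE ->.
Qed.

Lemma layer_fix L s : uniq (flatten (map (@gate_support n) L)) ->
  forall j, j \notin flatten (map (@gate_support n) L) ->
  (proc xr (embed L) s).1.1 j = s.1 j /\ (proc xr (embed L) s).1.2 j = s.2 j.
Proof.
elim: L => [|g L IH] //= u j.
rewrite mem_cat negb_or => /andP [j1 j2].
move: u; rewrite cat_uniq => /and3P [_ _ u].
have [E1 E2] := IH u j j2.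
have [F1 F2] := upd_off (proc xr (embed L) s).1 j1.
by rewrite F1 F2 E1 E2.
Qed.

Definition mapS T2 (f : T -> T2) (s : st T) : st T2 := (fun j => f (s.1 j), fun j => f (s.2 j)).

Lemma proc_map T2 (x2 : T2 -> T2 -> T2) (f : T -> T2) :
  (forall u v, f (xr u v) = x2 (f u) (f v)) -> forall G s,
  proc x2 G (mapS f s) = (mapS f (proc xr G s).1, map f (proc xr G s).2).
Proof.
move=> hf; elim=> [|[g c] G IH] s; first by [].
rewrite /= IH /=.
case: g => [q|q|q|c' t] /=; congr pair; rewrite /mapS /=; congr pair;
  apply: functional_extensionality => j //=; case: (j == _); by rewrite ?hf.
Qed.

End ProcT.

End Q.

Section F.
Variables (n : nat) (i0 : 'I_n).

Definition bxor (u v : bform n) : bform n := BAnd (BOr u v) (BNot (BAnd u v)).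
Definition cF : bform n := BAnd (BVar i0) (BNot (BVar i0)).
Definition cT : bform n := BOr (BVar i0) (BNot (BVar i0)).

Lemma bxor_depth u v : bdepth (bxor u v) = (maxn (bdepth u) (bdepth v) + 3)%N.
Proof. rewrite /=; lia. Qed.

Lemma beval_bxor u v x : beval (bxor u v) x = beval u x (+) beval v x.
Proof. by rewrite /=; case: (beval u x); case: (beval v x). Qed.

Fixpoint mux (fs : seq (bform n)) (F : seq bool -> bool) : bform n :=
  match fs with
  | [::] => if F [::] then cT else cF
  | f :: fs' => BOr (BAnd f (mux fs' (fun s => F (true :: s))))
                    (BAnd (BNot f) (mux fs' (fun s => F (false :: s))))
  end.

Lemma beval_mux fs F x : beval (mux fs F) x = F (map (fun f => beval f x) fs).
Proof.
elim: fs F => [|f fs IH] F /=. by case: (F [::]) => /=; case: (x i0).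
by rewrite !IH; case: (beval f x); rewrite /= ?orbF.
Qed.

Lemma depth_mux fs F D : all (fun f => bdepth f <= D)%N fs ->
  (bdepth (mux fs F) <= D + 2 * size fs + 2)%N.
Proof.
elim: fs F => [|f fs IH] F /=; first by case: (F [::]) => /=; lia.
case/andP => hf hs.
have h1 := IH (fun s => F (true :: s)) hs.
have h2 := IH (fun s => F (false :: s)) hs.
lia.
Qed.

Definition bnd (D : nat) (s : st n (bform n)) := forall j, (bdepth (s.1 j) <= D)%N /\ (bdepth (s.2 j) <= D)%N.

Lemma upd_on (g : gate n) (s : st n (bform n)) (D : nat) : (forall j, j \in gate_support g -> (bdepth (s.1 j) <= D)%N /\ (bdepth (s.2 j) <= D)%N) ->
  forall j, j \in gate_support g ->
  (bdepth ((upd bxor g s).1 j) <= D + 3)%N /\ (bdepth ((upd bxor g s).2 j) <= D + 3)%N.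
Proof.
case: g => [q|q|q|c t] /= H j; rewrite ?inE.
- move/eqP => ->; rewrite eqxx; have := H q; rewrite inE eqxx => /(_ isT); lia.
- move/eqP => ->; rewrite eqxx bxor_depth; have := H q; rewrite inE eqxx => /(_ isT); lia.
- move/eqP => ->; have := H q; rewrite inE eqxx => /(_ isT); lia.
- have := H c; have := H t; rewrite !inE !eqxx orbT => /(_ isT) ht /(_ isT) hc.
  case/orP => /eqP ->; rewrite ?eqxx.
    by case: (c == t); rewrite !bxor_depth; case: (t == c); rewrite ?bxor_depth; lia.
  by case: (t == c); rewrite !bxor_depth; lia.
Qed.

Lemma layer_depth (L : seq (gate n)) (s : st n (bform n)) (D : nat) :
  uniq (flatten (map (@gate_support n) L)) -> bnd D s ->
  bnd (D + 3) (proc bxor (embed L) s).1 /\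
  all (fun f => bdepth f <= D)%N (proc bxor (embed L) s).2.
Proof.
elim: L => [|g L IH] /= u hs.
  by split => // j; have := hs j; lia.
move: u; rewrite cat_uniq => /and3P [ug dis uL].
have [h1 h2] := IH uL hs.
have fixL := layer_fix bxor s uL.
have hsup : forall j, j \in gate_support g -> j \notin flatten (map (@gate_support n) L).
  by move=> j jg; apply/negP => jL; move/hasPn: dis => /(_ j jL); rewrite /= jg.
split.
  move=> j; case jg: (j \in gate_support g).
    apply: (upd_on _ jg) => j' j'g; have [e1 e2] := fixL j' (hsup j' j'g).
    by rewrite e1 e2; exact: hs.
  have [e1 e2] := upd_off bxor (proc bxor (embed L) s).1 (negbT jg).
  by rewrite e1 e2; exact: h1.
case: g hsup {ug dis} => [q|q|q|c t] hsup //=.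
rewrite h2 andbT; have [e1 _] := fixL q (hsup q (mem_head _ _)).
by rewrite e1; case: (hs q).
Qed.

Lemma circ_depth (Q : qcircuit n) (s : st n (bform n)) (D : nat) :
  qcircuit_ok Q -> bnd D s ->
  bnd (D + 3 * size Q) (proc bxor (embed (flatten (rev Q))) s).1 /\
  all (fun f => bdepth f <= D + 3 * size Q)%N (proc bxor (embed (flatten (rev Q))) s).2.
Proof.
elim: Q s D => [|L Q IH] s D.
  by move=> _ hs; rewrite /= addn0; split.
rewrite /qcircuit_ok /= => /andP [/andP [_ uL] okQ] hs.
rewrite rev_cons flatten_rcons /embed map_cat proc_cat -!/(embed _).
have [h1 h2] := layer_depth uL hs.
have [h3 h4] := IH _ _ okQ h1.
have -> : (D + 3 * (size Q).+1 = D + 3 + 3 * size Q)%N by lia.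
split => //; rewrite all_cat h4 /=.
by apply: sub_all h2 => f /=; lia.
Qed.

End F.

Lemma ok_allok n (Q : qcircuit n) : qcircuit_ok Q -> allok (embed (flatten (rev Q))).
Proof.
move=> ok; rewrite /allok /embed all_map.
have h : forall L : layer n, layer_ok L -> all (fun g => xok g) L.
  move=> L /andP [_]; elim: L => [|g L IH] //=; rewrite cat_uniq => /and3P [u1 _ u2].
  rewrite IH // andbT.
  by case: g u1 => // c t /=; rewrite inE andbT.
have : all (fun L => all (fun g => xok g) L) (rev Q).
  by rewrite all_rev; apply: sub_all ok.
elim: (rev Q) => [|L Q' IH] //= /andP [h1 h2].
by rewrite all_cat h1 IH.
Qed.

Local Close Scope ring_scope.

Theorem corollary1 :
  exists c : nat, (0 < c)%N /\
  forall (n d t : nat) (Q : qcircuit n),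
    (1 <= n)%N -> (1 <= d)%N ->
    qcircuit_ok Q -> qdepth Q = d -> T_count Q = t ->
    exists C : ccircuit n, (cdepth C <= c * (d + t))%N /\ p_simulates C Q.
Proof.
exists 10; split => // n d t Q n1 d1 ok dQ tQ.
pose i0 : 'I_n := Ordinal n1.
pose G := embed (flatten (rev Q)).
pose sF : st n (bform n) := (fun j => BVar j, fun _ => cF i0).
pose R := proc (@bxor n) G sF.
pose e0 : vec n := fun z => ((z == [ffun => false])%:R)%R.
pose wsel (sig : seq bool) : bits n :=
  odflt [ffun => false] [pick w | (chain (flipG G sig) e0 w != 0)%R].
pose C : ccircuit n := fun i => bxor (R.1.1 i) (mux i0 R.2 (fun sig => wsel sig i)).
have okG : allok G := ok_allok ok.
exists C; split.
  rewrite /cdepth; apply/bigmax_leqP => i _; rewrite /C bxor_depth.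
  have hs : bnd 2 sF by move=> j /=; split.
  have [h1 h2] := circ_depth ok hs.
  have hm := depth_mux i0 (fun sig => wsel sig i) h2.
  have sz : size R.2 = t.
    rewrite proc_size /G /embed count_map count_flatten map_rev sumn_rev -tQ /T_count.
    by congr sumn; apply: eq_map => L; apply: eq_count.
  have := (h1 i).1; move: hm; rewrite -/R sz /qdepth in dQ *; rewrite dQ; lia.
move=> x.
pose f := fun phi : bform n => beval phi x.
have hf : forall u v, f (bxor u v) = f u (+) f v by move=> u v; exact: beval_bxor.
have PM := proc_map hf G sF.
rewrite qc_col qc_chain -/G.
have ex : (fun z => ((z == x)%:R)%R) = Pv (mapS f sF).1 (mapS f sF).2 e0.
  apply: functional_extensionality => y; rewrite /Pv /e0.
  have -> : dot (mapS f sF).2 (bx y (mapS f sF).1) = false.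
    by rewrite /dot big1 // => j _; rewrite /= /f /=; case: (x i0).
  rewrite /= GRing.mul1r; congr (_%:R)%R.
  case: (eqVneq y x) => [->|ne].
    suff -> : bx x (fun j => f (BVar j)) = [ffun => false] by rewrite eqxx.
    by apply/ffunP => j; rewrite !ffunE /f /= addbb.
  case: eqP => // /ffunP E.
  have yx : y = x by apply/ffunP => j; have := E j; rewrite !ffunE /f /=; case: (y j); case: (x j).
  by rewrite yx eqxx in ne.
rewrite ex.
have [l nz E] := push (mapS f sF).1 (mapS f sF).2 e0 okG.
rewrite E (_ : ((mapS f sF).1, (mapS f sF).2) = mapS f sF) // PM -/R.
rewrite /Pv GRing.mulf_neq0 // GRing.mulf_neq0 ?sg_neq0 //.
have -> : bx (ceval C x) (mapS f R.1).1 = wsel (map f R.2).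
  apply/ffunP => j; rewrite !ffunE /C beval_bxor beval_mux /=.
  by rewrite -/(f (R.1.1 j)) addbC addKb.
rewrite /wsel; case: pickP => [w' //|none].
have e0nz : exists z, (e0 z != 0)%R by exists [ffun => false]; rewrite /e0 eqxx GRing.oner_neq0.
have [y hy] := inj_chain (allok_flip (map f R.2) okG) e0nz.
by rewrite none in hy.
Qed.
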